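(* Let $1\le\beta<\sqrt{5/3}$, and let $\sigma,\sigma_0:[n]\to[K]$ be assignments all of whose community sizes lie in $[\frac{n}{\beta K},\frac{\beta n}{K}]$, with $d(\sigma,\sigma_0)=m$ for an integer $0<m<n$. Then $$\alpha(\sigma;\sigma_0)\wedge\gamma(\sigma;\sigma_0)\ge\begin{cases}\frac{nm}{K\beta}-m^2, & m\le\frac{n}{2K},\\ \frac{c_\beta nm}{K}, & m>\frac n{2K},\end{cases}\qquad c_\beta=\frac{(5-3\beta^2)^2}{2\beta(1+3(5-3\beta^2)^2)}.$$
   Context: $d(\sigma_1,\sigma_2)=\min_\delta d_H(\sigma_1,\delta\circ\sigma_2)$ over permutations $\delta$ of $[K]$, $d_H$ the Hamming distance. $\alpha(\sigma;\sigma_0)=|\{(i,j):i<j,\ \sigma_0(i)=\sigma_0(j),\ \sigma(i)\ne\sigma(j)\}|$ and $\gamma(\sigma;\sigma_0)=|\{(i,j):i<j,\ \sigma_0(i)\ne\sigma_0(j),\ \sigma(i)=\sigma(j)\}|$. *)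

(* Defs.v *)
From HB Require Import structures.
From mathcomp Require Import all_boot all_order all_fingroup all_algebra.
Set Implicit Arguments. Unset Strict Implicit. Unset Printing Implicit Defensive.
Import Order.TTheory GRing.Theory Num.Theory.

Definition hamming (n K : nat) (s1 s2 : 'I_n -> 'I_K) : nat :=
  #|[set i : 'I_n | s1 i != s2 i]|.

(* d(s1,s2) = min over permutations delta of [K] of d_H(s1, delta o s2).
   The default n of the min is harmless: every Hamming distance is <= n
   and {perm 'I_K} is nonempty. *)
Definition assign_dist (n K : nat) (s1 s2 : 'I_n -> 'I_K) : nat :=
  \big[minn/n]_(delta : {perm 'I_K}) hamming s1 (fun i => delta (s2 i)).

Definition alpha_pairs (n K : nat) (s s0 : 'I_n -> 'I_K) : nat :=
  #|[set p : 'I_n * 'I_n | [&& p.1 < p.2, s0 p.1 == s0 p.2 & s p.1 != s p.2]]|.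

Definition gamma_pairs (n K : nat) (s s0 : 'I_n -> 'I_K) : nat :=
  #|[set p : 'I_n * 'I_n | [&& p.1 < p.2, s0 p.1 != s0 p.2 & s p.1 == s p.2]]|.

Definition comm_size (n K : nat) (s : 'I_n -> 'I_K) (k : 'I_K) : nat :=
  #|[set i : 'I_n | s i == k]|.

(* Main.v *)
Require Import Defs.
From HB Require Import structures.
From mathcomp Require Import all_boot all_order all_fingroup all_algebra.
From mathcomp Require Import zify ring lra.
Import Order.TTheory GRing.Theory Num.Theory.
Set Implicit Arguments. Unset Strict Implicit. Unset Printing Implicit Defensive.

Lemma card_sum (T : finType) (P : pred T) : #|[set x | P x]| = \sum_x (P x : nat).
Proof.
rewrite -sum1_card big_mkcond /=; apply: eq_bigr => x _; rewrite inE; by case: (P x).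
Qed.

Lemma argmin_le n K (s t : 'I_n -> 'I_K) (d' : {perm 'I_K}) :
  (assign_dist s t <= hamming s (fun i => d' (t i)))%N.
Proof.
rewrite /assign_dist.
have : d' \in index_enum {perm 'I_K} by rewrite mem_index_enum.
elim: (index_enum _) => // y r IH; rewrite inE big_cons => /orP[/eqP->|/IH h].
  exact: geq_minl.
exact: leq_trans (geq_minr _ _) h.
Qed.

Lemma argmin_ex n K (s t : 'I_n -> 'I_K) : (assign_dist s t < n)%N ->
  exists d : {perm 'I_K}, hamming s (fun i => d (t i)) = assign_dist s t.
Proof.
rewrite /assign_dist.
apply: (big_ind (fun x => x < n -> exists d : {perm 'I_K}, hamming s (fun i => d (t i)) = x)%N).
- by rewrite ltnn.
- move=> x y IHx IHy; rewrite /minn; case: (ltnP x y) => _.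
  + move=> hx; have [d hd] := IHx hx; by exists d.
  + move=> hx; have [d hd] := IHy hx; by exists d.
- move=> d _ _; by exists d.
Qed.

Lemma swap_pt K (a b x y : 'I_K) : a != b ->
 ((y != x) + ((x == a) && (y == a)) + ((x == b) && (y == b)) =
  (y != tperm a b x) + ((x == a) && (y == b)) + ((x == b) && (y == a)))%N.
Proof.
move=> ab.
have [->|xa] := eqVneq x a.
  rewrite tpermL (negbTE ab) /=.
  by case: (y == a); case: (y == b).
have [->|xb] := eqVneq x b.
  rewrite tpermR /=.
  by case: (y == a); case: (y == b).
by rewrite tpermD // eq_sym.

Qed.


Definition Nab n K (s t : 'I_n -> 'I_K) (a b : 'I_K) : nat :=
  \sum_j ((t j == a) && (s j == b) : nat).

Lemma opt_swap n K (s t : 'I_n -> 'I_K) (a b : 'I_K) :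
  (forall d : {perm 'I_K}, hamming s t <= hamming s (fun j => d (t j)))%N ->
  a != b -> (Nab s t a b + Nab s t b a <= Nab s t a a + Nab s t b b)%N.
Proof.
move=> H ab.
have E : (hamming s t + Nab s t a a + Nab s t b b =
   hamming s (fun j => tperm a b (t j)) + Nab s t a b + Nab s t b a)%N.
  rewrite /hamming /Nab !card_sum -!big_split; apply: eq_bigr => j _; exact: swap_pt.
have HH : (hamming s t <= hamming s (fun j => tperm a b (t j)))%N := H (tperm a b).
lia.
Qed.

Lemma alpha_sum n K (s t : 'I_n -> 'I_K) :
  (2 * alpha_pairs s t = \sum_(i : 'I_n) \sum_(j : 'I_n) ((t i == t j) && (s i != s j) : nat))%N.
Proof.
set C := fun i j => ((t i == t j) && (s i != s j)).
have sym : forall i j, C i j = C j i by move=> i j; rewrite /C eq_sym (eq_sym (s i)).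
have -> : alpha_pairs s t = (\sum_(i : 'I_n) \sum_(j : 'I_n) ((i < j) && C i j : nat))%N.
  rewrite /alpha_pairs card_sum pair_big /=; by apply: eq_big.
have E1 : (\sum_(i : 'I_n) \sum_(j : 'I_n) (C i j : nat) = \sum_(i : 'I_n) \sum_(j : 'I_n) ((i < j) && C i j : nat)
        + \sum_(i : 'I_n) \sum_(j : 'I_n) ((j < i) && C i j : nat))%N.
  rewrite -big_split; apply: eq_bigr => i _; rewrite -big_split; apply: eq_bigr => j _ /=.
  case: (ltngtP i j) => hij /=; [by rewrite addn0 | by [] |].
  by rewrite (ord_inj hij) /C !eqxx.
have E2 : (\sum_(i : 'I_n) \sum_(j : 'I_n) ((j < i) && C i j : nat) = \sum_(i : 'I_n) \sum_(j : 'I_n) ((i < j) && C i j : nat))%N.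
  rewrite exchange_big; apply: eq_bigr => i _; apply: eq_bigr => j _; by rewrite sym.
rewrite [RHS]E1 E2; lia.
Qed.


Definition qf n K (s t : 'I_n -> 'I_K) (i : 'I_n) : nat :=
  (\sum_j ((t i == t j) && (s i != s j) : nat) +
   \sum_j ((s j == t j) * ((t i == t j) && (s i != s j))))%N.

Lemma main_ineq n K (s t : 'I_n -> 'I_K) :
  (\sum_i (s i != t i) * qf s t i <= 2 * alpha_pairs s t)%N.
Proof.
rewrite alpha_sum.
set C := fun i j => ((t i == t j) && (s i != s j)).
have sym : forall i j, C i j = C j i by move=> i j; rewrite /C eq_sym (eq_sym (s i)).
rewrite (_ : \sum_i _ = \sum_(i : 'I_n) \sum_(j : 'I_n)
   ((s i != t i) * C i j + (s i != t i) * ((s j == t j) * C i j)))%N; last first.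
  by apply: eq_bigr => i _; rewrite /qf mulnDr !big_distrr /= -big_split.
rewrite (eq_bigr (fun i => \sum_(j : 'I_n) ((s i != t i) * C i j : nat) +
     \sum_(j : 'I_n) ((s i != t i) * ((s j == t j) * C i j)))%N); last first.
  by move=> i _; rewrite big_split.
rewrite big_split /=.
have -> : (\sum_(i : 'I_n) \sum_(j : 'I_n) ((s i != t i) * ((s j == t j) * C i j)) =
   \sum_(i : 'I_n) \sum_(j : 'I_n) ((s i == t i) * ((s j != t j) * C i j)))%N.
  rewrite exchange_big; apply: eq_bigr => i _; apply: eq_bigr => j _.
  by rewrite sym mulnCA.
rewrite -big_split; apply: leq_sum => i _; rewrite -big_split; apply: leq_sum => j _ /=.
change ((s i != t i) * C i j + (s i == t i) * ((s j != t j) * C i j) <= C i j)%N.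
by case: (s i == t i); case: (s j == t j); case: (C i j).
Qed.

Lemma qf_bounds n K (s t : 'I_n -> 'I_K) (i : 'I_n) :
  (forall d : {perm 'I_K}, hamming s t <= hamming s (fun j => d (t j)))%N ->
  s i != t i ->
  (2 * comm_size t (t i) <= 2 * qf s t i + comm_size s (s i))%N /\
  (2 * comm_size t (t i) <= qf s t i + 2 * hamming s t)%N.
Proof.
move=> H mi.
set a := t i; set b := s i.
have ab : a != b by rewrite eq_sym.
have B1 : (\sum_j ((t i == t j) && (s i != s j) : nat) + Nab s t a b = comm_size t a)%N.
  rewrite /Nab /comm_size card_sum -big_split; apply: eq_bigr => j _ /=.
  rewrite -/a -/b (eq_sym a) (eq_sym b).
  by case: (t j == a); case: (s j == b).
have B2 : (\sum_j ((s j == t j) * ((t i == t j) && (s i != s j))) = Nab s t a a)%N.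
  rewrite /Nab; apply: eq_bigr => j _ /=.
  rewrite -/a -/b (eq_sym a).
  have [->|] := eqVneq (t j) a; last by move=> _; rewrite /= muln0.
  rewrite /=; have [->|] := eqVneq (s j) a; last by rewrite mul0n.
  by rewrite eq_sym ab.
have B3 : (Nab s t a b + Nab s t b b <= comm_size s b)%N.
  rewrite /Nab /comm_size card_sum -big_split; apply: leq_sum => j _ /=.
  move: (t j) (s j) => x y.
  case: (y == b); rewrite ?andbF ?andbT //=.
  case E: (x == a) => /=; last by case: (x == b).
  by rewrite (eqP E) (negbTE ab).
have B4 : (comm_size t a <= Nab s t a a + hamming s t)%N.
  rewrite /Nab /comm_size /hamming !card_sum -big_split; apply: leq_sum => j _ /=.
  move: (t j) (s j) => x y.
  case E: (x == a) => //=.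
  rewrite (eqP E) eq_sym.
  by case: (a == y).
have B5 := opt_swap H ab.
have B6 : (Nab s t a a <= \sum_j ((t i == t j) && (s i != s j) : nat))%N.
  rewrite /Nab; apply: leq_sum => j _ /=.
  rewrite -/a -/b (eq_sym a) (eq_sym b).
  move: (t j) (s j) => x y.
  case: (x == a) => //=.
  case E: (y == a) => //=.
  by rewrite (eqP E); case: (a != b) ab.
have Q : qf s t i = (\sum_j ((t i == t j) && (s i != s j) : nat) + Nab s t a a)%N by rewrite -B2.
rewrite Q.
move: B1 B3 B4 B5 B6; set F := \sum_j _; lia.
Qed.

Local Open Scope ring_scope.

Lemma core_R (R : realFieldType) n K (s t : 'I_n -> 'I_K) (L U : R) (m : nat) :
  (forall d : {perm 'I_K}, hamming s t <= hamming s (fun j => d (t j)))%N ->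
  hamming s t = m ->
  (forall k, L <= (comm_size t k)%:R) -> (forall k, (comm_size s k)%:R <= U) ->
  m%:R * (2 * L - U) <= 4 * (alpha_pairs s t)%:R /\
  m%:R * (L - m%:R) <= (alpha_pairs s t)%:R.
Proof.
move=> H hm HL HU.
have MR : (\sum_i (((s i != t i) : nat)%:R * (qf s t i)%:R) <= 2 * (alpha_pairs s t)%:R :> R).
  have := main_ineq s t; rewrite -(ler_nat R) natrM natr_sum.
  by under eq_bigr do rewrite natrM.
have HM : (m%:R = \sum_i ((s i != t i) : nat)%:R :> R).
  by rewrite -hm /hamming card_sum natr_sum.
split.
  have : \sum_i (((s i != t i) : nat)%:R * ((2 * L - U) / 2)) <=
         \sum_i (((s i != t i) : nat)%:R * (qf s t i)%:R) :> R.
    apply: ler_sum => i _.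
    case mi: (s i != t i); last by rewrite !mul0r.
    rewrite !mul1r.
    have [B _] := qf_bounds H mi.
    move: B; set r := comm_size t _; set q := qf s t i; set c := comm_size s _.
    rewrite -(ler_nat R) natrD !natrM.
    have := HL (t i); have := HU (s i); lra.
  move=> h2; rewrite -mulr_suml -HM in h2; lra.
have : \sum_i (((s i != t i) : nat)%:R * (2 * (L - m%:R))) <=
       \sum_i (((s i != t i) : nat)%:R * (qf s t i)%:R) :> R.
  apply: ler_sum => i _.
  case mi: (s i != t i); last by rewrite !mul0r.
  rewrite !mul1r.
  have [_ B] := qf_bounds H mi.
  move: B; set r := comm_size t _; set q := qf s t i; set h := hamming s t.
  rewrite -(ler_nat R) natrD !natrM /h hm.
  have := HL (t i); lra.
move=> h2; rewrite -mulr_suml -HM in h2; lra.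
Qed.

Local Open Scope ring_scope.

Lemma hamming_ext n K (s t t' : 'I_n -> 'I_K) : t =1 t' -> hamming s t = hamming s t'.
Proof. by move=> e; rewrite /hamming; apply: eq_card => i; rewrite !inE e. Qed.

Lemma hamming_sym n K (s t : 'I_n -> 'I_K) : hamming s t = hamming t s.
Proof. by rewrite /hamming; apply: eq_card => i; rewrite !inE eq_sym. Qed.

Unset Implicit Arguments.
Theorem lemma6 (R : rcfType) (n K m : nat) (beta : R)
    (sigma sigma0 : 'I_n -> 'I_K) :
  1 <= beta -> beta < Num.sqrt (5 / 3) ->
  (forall k : 'I_K,
      n%:R / (beta * K%:R) <= (comm_size sigma k)%:R <= beta * n%:R / K%:R) ->
  (forall k : 'I_K,
      n%:R / (beta * K%:R) <= (comm_size sigma0 k)%:R <= beta * n%:R / K%:R) ->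
  assign_dist sigma sigma0 = m ->
  (0 < m < n)%N ->
  let c_beta := (5 - 3 * beta ^+ 2) ^+ 2 /
                (2 * beta * (1 + 3 * (5 - 3 * beta ^+ 2) ^+ 2)) in
  let ag := minn (alpha_pairs sigma sigma0) (gamma_pairs sigma sigma0) in
  ((m%:R : R) <= n%:R / (2 * K%:R) ->
     (n%:R * m%:R / (K%:R * beta) : R) - m%:R ^+ 2 <= (ag%:R : R)) /\
  ((n%:R : R) / (2 * K%:R) < m%:R ->
     c_beta * n%:R * m%:R / K%:R <= (ag%:R : R)).
Proof.
move=> hb1 hb2 Hs Hs0 hd /andP[m0 mn] c_beta ag.
have b0 : 0 < beta by lra.
have hb3 : beta ^+ 2 < 5 / 3.
  have : Num.sqrt (beta^+2) < Num.sqrt (5/3) by rewrite sqrtr_sqr ger0_norm // ltW.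
  rewrite ltr_sqrt //; lra.
have i0 : 'I_n := Ordinal (leq_ltn_trans (leq0n m) mn).
have Kpos : (0 < K)%N := leq_ltn_trans (leq0n _) (ltn_ord (sigma i0)).
have [d0 hd0] : exists d : {perm 'I_K}, hamming sigma (fun i => d (sigma0 i)) = assign_dist sigma sigma0.
  by apply: argmin_ex; rewrite hd.
set t := fun i => d0 (sigma0 i).
have ht : hamming sigma t = m by rewrite /t hd0.
have opt1 : forall d : {perm 'I_K}, (hamming sigma t <= hamming sigma (fun j => d (t j)))%N.
  move=> d; rewrite hd0 (@hamming_ext _ _ _ _ (fun j => (d0 * d)%g (sigma0 j))).
    exact: argmin_le.
  by move=> j; rewrite permM.
have opt2 : forall d : {perm 'I_K}, (hamming t sigma <= hamming t (fun j => d (sigma j)))%N.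
  move=> d; rewrite hamming_sym.
  have -> : hamming t (fun j => d (sigma j)) = hamming sigma (fun j => (d^-1)%g (t j)).
    rewrite /hamming; apply: eq_card => j; rewrite !inE eq_sym.
    by rewrite -(inj_eq (@perm_inj _ (d^-1)%g)) permK.
  exact: opt1.
have ht2 : hamming t sigma = m by rewrite hamming_sym.
have Ct : forall k, comm_size t k = comm_size sigma0 ((d0^-1)%g k).
  move=> k; rewrite /comm_size; apply: eq_card => j; rewrite !inE /t.
  by rewrite -[RHS](inj_eq (@perm_inj _ d0)) permKV.
set L : R := n%:R / (beta * K%:R).
set U : R := beta * n%:R / K%:R.
have HLt : forall k, L <= (comm_size t k)%:R by move=> k; rewrite Ct; case/andP: (Hs0 ((d0^-1)%g k)).
have HUt : forall k, (comm_size t k)%:R <= U by move=> k; rewrite Ct; case/andP: (Hs0 ((d0^-1)%g k)).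
have HLs : forall k, L <= (comm_size sigma k)%:R by move=> k; case/andP: (Hs k).
have HUs : forall k, (comm_size sigma k)%:R <= U by move=> k; case/andP: (Hs k).
have EA : alpha_pairs sigma sigma0 = alpha_pairs sigma t.
  rewrite /alpha_pairs; apply: eq_card => p; rewrite !inE /t.
  by rewrite (inj_eq (@perm_inj _ d0)).
have EG : gamma_pairs sigma sigma0 = alpha_pairs t sigma.
  rewrite /alpha_pairs /gamma_pairs; apply: eq_card => p; rewrite !inE /t.
  rewrite (inj_eq (@perm_inj _ d0)).
  by case: (_ < _)%N; case: (_ == _); case: (_ == _).
have [A1 A2] := core_R opt1 ht HLt HUs.
have [G1 G2] := core_R opt2 ht2 HLs HUt.
have [X1 X2] : m%:R * (2 * L - U) <= 4 * ag%:R /\ m%:R * (L - m%:R) <= ag%:R.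
  rewrite /ag EA EG /minn; by case: ifP.
have Kr : (K%:R : R) != 0 by rewrite pnatr_eq0 -lt0n.
have Kr0 : (0 : R) < K%:R by rewrite ltr0n.
have bn0 : beta != 0 by rewrite gt_eqF.
split.
  move=> _.
  have -> : n%:R * m%:R / (K%:R * beta) - m%:R ^+ 2 = m%:R * (L - m%:R) :> R.
    by rewrite /L; field; rewrite bn0 Kr.
  exact: X2.
move=> _.
set x : R := m%:R * (n%:R / K%:R).
have x0 : 0 <= x by rewrite /x mulr_ge0 // divr_ge0.
have E1 : m%:R * (2 * L - U) = x * (2 / beta - beta).
  by rewrite /x /L /U; field; rewrite bn0 Kr.
have E2 : c_beta * n%:R * m%:R / K%:R = c_beta * x.
  by rewrite /x; field.
rewrite E2.
have hc : c_beta <= (2 / beta - beta) / 4.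
  rewrite /c_beta.
  set s := 5 - 3 * beta ^+ 2.
  have s0 : 0 < s by rewrite /s; lra.
  have den : 0 < 2 * beta * (1 + 3 * s ^+ 2).
    by rewrite !mulr_gt0 // ?ltr0n //; nra.
  rewrite ler_pdivrMr //.
  have -> : (2 / beta - beta) / 4 * (2 * beta * (1 + 3 * s ^+ 2)) =
            (2 - beta ^+ 2) * (1 + 3 * s ^+ 2) / 2.
    by field; rewrite bn0.
  have hs : 2 - beta ^+ 2 = (s + 1) / 3 by rewrite /s; field.
  rewrite hs.
  have : 0 <= s * (s - 1/2) ^+ 2 by rewrite mulr_ge0 // ?sqr_ge0 // ltW.
  nra.
have : c_beta * x <= (2 / beta - beta) / 4 * x by rewrite ler_wpM2r.
lra.
Qed.
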